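(* Let $N\ge 2$ and $d\ge 1$. Let $L^{\sharp}(\mathbf q^{(0)},\dots,\mathbf q^{(N-1)},t)$ be an $(N-1)$-th order Lagrangian (possibly singular, possibly explicitly time dependent) in the coordinates $q^i$, $i=1,\dots,d$. Suppose its Ostrogradski canonical theory has only first-class constraints $\gamma^{\sharp}_a(\mathbf q_\sharp,\mathbf p^\sharp,t)\approx 0$ (primary and secondary), and canonical Hamiltonian $H^{\sharp}(\mathbf q_\sharp,\mathbf p^\sharp,t)$. Assume $H^\sharp$ and all $\gamma^\sharp_a$ are polynomials in the momenta $p^\sharp_{Ai}$, quantized with a fixed operator ordering. Let $W(\mathbf q^{(0)},\dots,\mathbf q^{(N-1)},t)$ be an arbitrary smooth function, and put $$L:=L^\sharp+\frac{dW}{dt},$$ an $N$-th order Lagrangian. Treat $L$ by the extended Ostrogradski formalism described in the context. Its quantum mechanics is then given by three conditions on wave functions $\psi(\mathbf q,t)$, where $\mathbf q=(q^{Ii})_{I=0,\dots,N-1}$: $$i\hbar\,\partial_t\psi=\Big[\hat H^\sharp\Big(\mathbf q_\sharp,\,-i\hbar\tfrac{\partial}{\partial \mathbf q_\sharp}-\tfrac{\partial W}{\partial \mathbf q_\sharp},\,t\Big)-\tfrac{\partial W}{\partial t}\Big]\psi,$$ $$\Big(-i\hbar\tfrac{\partial}{\partial q^{N-1,i}}-\tfrac{\partial W}{\partial q^{N-1,i}}\Big)\psi=0\quad (i=1,\dots,d),$$ $$\hat\gamma^\sharp_a\Big(\mathbf q_\sharp,\,-i\hbar\tfrac{\partial}{\partial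 \mathbf q_\sharp}-\tfrac{\partial W}{\partial \mathbf q_\sharp},\,t\Big)\psi=0\quad\text{for all }a .$$ The quantum mechanics of $L^\sharp$ is given by two conditions on wave functions $\psi^\sharp(\mathbf q_\sharp,t)$: $$i\hbar\,\partial_t\psi^\sharp=\hat H^\sharp\Big(\mathbf q_\sharp,-i\hbar\tfrac{\partial}{\partial\mathbf q_\sharp},t\Big)\psi^\sharp,\qquad \hat\gamma^\sharp_a\Big(\mathbf q_\sharp,-i\hbar\tfrac{\partial}{\partial\mathbf q_\sharp},t\Big)\psi^\sharp=0 .$$ Then a function $\psi(\mathbf q,t)$ satisfies the three conditions for $L$ if and only if $$\psi(\mathbf q,t)=\psi^\sharp(\mathbf q_\sharp,t)\exp\!\big(iW(\mathbf q,t)/\hbar\big)$$ for a function $\psi^\sharp$ satisfying the two conditions for $L^\sharp$. Thus the $N$-th order Lagrangian $L$ and the $(N-1)$-th order Lagrangian $L^\sharp$ lead to the same quantum mechanics.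
   Context: Ostrogradski formalism: for an $N$-th order Lagrangian $L(\mathbf q^{(0)},\dots,\mathbf q^{(N)},t)$ with $q^{(I)i}=d^Iq^i/dt^I$, the canonical variables are $q^{Ii}:=q^{(I)i}$ and $p_{Ii}:=\sum_{K=I+1}^{N}(-d/dt)^{K-I-1}\partial L/\partial q^{(K)i}$, for $I=0,\dots,N-1$. The Poisson bracket is $\{F,G\}=\sum_{I,i}\big(\partial_{q^{Ii}}F\,\partial_{p_{Ii}}G-\partial_{p_{Ii}}F\,\partial_{q^{Ii}}G\big)$. Quantization (Dirac): when all constraints are first class, one uses the Schrödinger picture with $\hat q^{Ii}=q^{Ii}$ and $\hat p_{Ii}=-i\hbar\,\partial/\partial q^{Ii}$. The wave function obeys $i\hbar\partial_t\psi=\hat H\psi$ with $H$ the canonical Hamiltonian, and satisfies $\hat\gamma\psi=0$ for every first-class constraint $\gamma$. Notation: indices $A,B$ run over $0,\dots,N-2$; $\mathbf q_\sharp=(q^{Ai})$ and $\mathbf p^\sharp=(p^\sharp_{Ai})$ are the Ostrogradski variables of $L^\sharp$. Repeated indices are summed. Extended formalism for $L$: the phase space has coordinates $q^{Ii},p_{Ii}$, $I=0,\dots,N-1$. Define the shifted momenta $p^\sharp_{Ai}:=p_{Ai}-\partial W/\partial q^{Ai}$. The canonical Hamiltonian is $H(\mathbf q,\mathbf p,t)=H^\sharp(\mathbf q_\sharp,\mathbf p^\sharp,t)-\partial W/\partial t$. The constraints are $\gamma_i:=p_{N-1,i}-\partial W/\partial q^{N-1,i}\approx 0$ together with the $\gamma^\sharp_a(\mathbf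 q_\sharp,\mathbf p^\sharp,t)\approx0$, all of which are first class. *)

(* Defs.v *)
From Stdlib Require Import Reals List.
From Coquelicot Require Import Coquelicot.
From mathcomp Require Import ssreflect ssrbool eqtype ssrnat fintype.

Set Implicit Arguments.
Unset Strict Implicit.

Open Scope R_scope.

(* Configuration space: coordinates q^{I i}, I : 'I_n (derivative order), i : 'I_d. *)
Definition Cfg (n d : nat) : Type := 'I_n -> 'I_d -> R.

Definition upd (n d : nat) (q : Cfg n d) (I : 'I_n) (i : 'I_d) (s : R) : Cfg n d :=
  fun J j => if (J == I) && (j == i) then s else q J j.

Definition CFun (n d : nat) : Type := Cfg n d -> R -> C.

Definition Cderiv (f : R -> C) (x : R) : C :=
  (Derive (fun s => fst (f s)) x, Derive (fun s => snd (f s)) x).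
Definition Cex_derive (f : R -> C) (x : R) : Prop :=
  ex_derive (fun s => fst (f s)) x /\ ex_derive (fun s => snd (f s)) x.

Definition dq (n d : nat) (F : CFun n d) (I : 'I_n) (i : 'I_d) : CFun n d :=
  fun q t => Cderiv (fun s => F (upd q I i s) t) (q I i).
Definition dt (n d : nat) (F : CFun n d) : CFun n d :=
  fun q t => Cderiv (fun s => F q s) t.

Definition dqR (n d : nat) (W : Cfg n d -> R -> R) (I : 'I_n) (i : 'I_d)
  : Cfg n d -> R -> R :=
  fun q t => Derive (fun s => W (upd q I i s) t) (q I i).
Definition dtR (n d : nat) (W : Cfg n d -> R -> R) : Cfg n d -> R -> R :=
  fun q t => Derive (fun s => W q s) t.

(* Smoothness: all iterated partial derivatives (in q^{I i} and t) exist everywhere.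
   A direction is None (time) or Some (I,i). *)
Definition dir (n d : nat) : Type := option ('I_n * 'I_d).

Definition dir_deriv (n d : nat) (F : CFun n d) (e : dir n d) : CFun n d :=
  match e with
  | None => dt F
  | Some (J, i) => dq F J i
  end.

Definition dir_ex (n d : nat) (F : CFun n d) (e : dir n d) (q : Cfg n d) (t : R) : Prop :=
  match e with
  | None => Cex_derive (fun s => F q s) t
  | Some (J, i) => Cex_derive (fun s => F (upd q J i s) t) (q J i)
  end.

Definition smoothC (n d : nat) (F : CFun n d) : Prop :=
  forall (ds : list (dir n d)) (e : dir n d) (q : Cfg n d) (t : R),
    dir_ex (fold_right (fun e' G => dir_deriv G e') F ds) e q t.

Definition smoothR (n d : nat) (W : Cfg n d -> R -> R) : Prop :=
  smoothC (fun q t => RtoC (W q t)).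

Definition expi (theta : R) : C := (cos theta, sin theta).

(* Quantized operators that are polynomial in the momenta p_{A i} with a fixed
   operator ordering: a finite sum of ordered words, each word a product of
   factors which are either multiplication by a coefficient function f(q_#,t)
   or a momentum operator p_{A i}.  The leftmost factor acts last. *)
Inductive factor (n d : nat) : Type :=
  | Mul of CFun n d
  | Mom of 'I_n & 'I_d.
Arguments Mul {n d} _.
Arguments Mom {n d} _ _.

Definition word (n d : nat) := list (factor n d).
Definition oper (n d : nat) := list (word n d).

Definition op_smooth (n d : nat) (H : oper n d) : Prop :=
  forall w, In w H -> forall f, In (Mul f) w -> smoothC f.

Fixpoint apply_word (n d : nat) (X : Type)
  (lift : CFun n d -> X -> R -> C)
  (P : 'I_n -> 'I_d -> (X -> R -> C) -> (X -> R -> C))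
  (w : word n d) (psi : X -> R -> C) : X -> R -> C :=
  match w with
  | nil => psi
  | Mul f :: w' => fun x t => Cmult (lift f x t) (apply_word lift P w' psi x t)
  | Mom A i :: w' => P A i (apply_word lift P w' psi)
  end.

Definition apply_op (n d : nat) (X : Type)
  (lift : CFun n d -> X -> R -> C)
  (P : 'I_n -> 'I_d -> (X -> R -> C) -> (X -> R -> C))
  (H : oper n d) (psi : X -> R -> C) : X -> R -> C :=
  fun x t => fold_right (fun w acc => Cplus (apply_word lift P w psi x t) acc)
                        (RtoC 0) H.

(* ---- The N-th order theory, N = M.+1: full coordinates Cfg M.+1 d,
        sharp coordinates q_# = (q^{A i})_{A < M} : Cfg M d. ---- *)

Definition wid (M : nat) (A : 'I_M) : 'I_M.+1 := widen_ord (leqnSn M) A.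

Definition sharp (M d : nat) (q : Cfg M.+1 d) : Cfg M d := fun A i => q (wid A) i.

Definition lift_sharp (M d : nat) (f : CFun M d) : CFun M.+1 d :=
  fun q t => f (sharp q) t.

Definition p_std (hbar : R) {M d : nat} (A : 'I_M) (i : 'I_d) (phi : CFun M d)
  : CFun M d :=
  fun q t => Cmult (Copp (Cmult Ci (RtoC hbar))) (dq phi A i q t).

Definition p_shift (hbar : R) {M d : nat} (W : Cfg M.+1 d -> R -> R)
  (A : 'I_M) (i : 'I_d) (psi : CFun M.+1 d) : CFun M.+1 d :=
  fun q t => Cminus (Cmult (Copp (Cmult Ci (RtoC hbar))) (dq psi (wid A) i q t))
                    (Cmult (RtoC (dqR W (wid A) i q t)) (psi q t)).

Definition QM_L (hbar : R) (M d : nat) (K : Type) (Hs : oper M d)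
  (gam : K -> oper M d) (W : Cfg M.+1 d -> R -> R) (psi : CFun M.+1 d) : Prop :=
  (forall q t,
     Cmult (Cmult Ci (RtoC hbar)) (dt psi q t) =
     Cminus (apply_op (@lift_sharp M d) (p_shift hbar W) Hs psi q t)
            (Cmult (RtoC (dtR W q t)) (psi q t)))
  /\ (forall (i : 'I_d) q t,
     Cminus (Cmult (Copp (Cmult Ci (RtoC hbar))) (dq psi ord_max i q t))
            (Cmult (RtoC (dqR W ord_max i q t)) (psi q t)) = RtoC 0)
  /\ (forall (a : K) q t,
     apply_op (@lift_sharp M d) (p_shift hbar W) (gam a) psi q t = RtoC 0).

Definition QM_sharp (hbar : R) (M d : nat) (K : Type) (Hs : oper M d)
  (gam : K -> oper M d) (psis : CFun M d) : Prop :=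
  (forall q t,
     Cmult (Cmult Ci (RtoC hbar)) (dt psis q t) =
     apply_op (fun f => f) (p_std hbar) Hs psis q t)
  /\ (forall (a : K) q t,
     apply_op (fun f => f) (p_std hbar) (gam a) psis q t = RtoC 0).

(* Main.v *)
Require Import Defs.
From Stdlib Require Import Reals List FunctionalExtensionality Lra.
From Coquelicot Require Import Coquelicot.
From mathcomp Require Import ssreflect ssrfun ssrbool eqtype ssrnat fintype.

Open Scope R_scope.
Set Implicit Arguments.

Lemma is_derive_eqv (f : R -> R) (x l lp : R) : is_derive f x l -> @eq R l lp -> is_derive f x lp.
Proof. intros H ->; exact H. Qed.

Lemma isd_mult (f g : R -> R) x a b : is_derive f x a -> is_derive g x b ->
  is_derive (fun s => f s * g s) x (a * g x + f x * b).
Proof. intros Ha Hb. apply (is_derive_mult f g x a b Ha Hb). intros; apply Rmult_comm. Qed.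
Lemma isd_plus (f g : R -> R) x a b : is_derive f x a -> is_derive g x b ->
  is_derive (fun s => f s + g s) x (a + b).
Proof. intros Ha Hb. apply (is_derive_plus f g x a b Ha Hb). Qed.
Lemma isd_minus (f g : R -> R) x a b : is_derive f x a -> is_derive g x b ->
  is_derive (fun s => f s - g s) x (a - b).
Proof. intros Ha Hb. apply (is_derive_minus f g x a b Ha Hb). Qed.
Lemma isd_const (c x : R) : is_derive (fun _ => c) x 0.
Proof. apply (is_derive_const c x). Qed.
Lemma isd_cos (f : R -> R) x a : is_derive f x a -> is_derive (fun s => cos (f s)) x (- sin (f x) * a).
Proof. intros H. eapply is_derive_eqv. apply (is_derive_comp cos f x _ a (is_derive_cos _) H).
 change (scal a (- sin (f x))) with (a * - sin (f x)). apply Rmult_comm. Qed.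
Lemma isd_sin (f : R -> R) x a : is_derive f x a -> is_derive (fun s => sin (f s)) x (cos (f x) * a).
Proof. intros H. eapply is_derive_eqv. apply (is_derive_comp sin f x _ a (is_derive_sin _) H).
 change (scal a (cos (f x))) with (a * cos (f x)). apply Rmult_comm. Qed.


Definition CisD (f : R -> C) (x : R) (l : C) : Prop :=
  is_derive (fun s => fst (f s)) x (fst l) /\ is_derive (fun s => snd (f s)) x (snd l).

Lemma CisD_ex f x l : CisD f x l -> Cex_derive f x.
Proof. intros [H1 H2]; split; eexists; eassumption. Qed.
Lemma CisD_deriv f x l : CisD f x l -> Cderiv f x = l.
Proof. intros [H1 H2]; unfold Cderiv. rewrite (is_derive_unique _ _ _ H1) (is_derive_unique _ _ _ H2).
  destruct l; reflexivity. Qed.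
Lemma Cex_CisD f x : Cex_derive f x -> CisD f x (Cderiv f x).
Proof. intros [H1 H2]; split; apply Derive_correct; assumption. Qed.

Lemma CisD_eqv f x l l' : CisD f x l -> l = l' -> CisD f x l'.
Proof. intros H ->; exact H. Qed.
Lemma CisD_ext f g x l : (forall s, f s = g s) -> CisD f x l -> CisD g x l.
Proof. intros E [H1 H2]; split; eapply is_derive_ext; try eassumption; intros; simpl; rewrite E; reflexivity. Qed.

Ltac ceq := repeat match goal with c : C |- _ => destruct c end;
  unfold Cminus, Cmult, Cplus, Copp, RtoC, Ci, expi; simpl; f_equal.

Lemma CisD_mult f g x a b : CisD f x a -> CisD g x b ->
  CisD (fun s => Cmult (f s) (g s)) x (Cplus (Cmult a (g x)) (Cmult (f x) b)).
Proof. intros [Ha1 Ha2] [Hb1 Hb2]; split; simpl.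
 - eapply is_derive_eqv. apply isd_minus; apply isd_mult; eassumption. simpl; ring.
 - eapply is_derive_eqv. apply isd_plus; apply isd_mult; eassumption. simpl; ring.
Qed.
Lemma CisD_plus f g x a b : CisD f x a -> CisD g x b ->
  CisD (fun s => Cplus (f s) (g s)) x (Cplus a b).
Proof. intros [Ha1 Ha2] [Hb1 Hb2]; split; simpl; apply isd_plus; eassumption. Qed.
Lemma CisD_const (c : C) x : CisD (fun _ => c) x (RtoC 0).
Proof. split; apply isd_const. Qed.
Lemma CisD_RtoC (w : R -> R) x a : is_derive w x a -> CisD (fun s => RtoC (w s)) x (RtoC a).
Proof. intros H; split; simpl; [exact H| apply isd_const]. Qed.
Lemma CisD_expi (w : R -> R) x a c : c <> 0 -> is_derive w x a ->
  CisD (fun s => expi (w s / c)) x (Cmult ((0%R, (a / c)%R) : C) (expi (w x / c))).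
Proof. intros Hc H. assert (H' : is_derive (fun s => w s / c) x (a / c)).
 { eapply is_derive_eqv. apply (isd_mult H (isd_const (/ c) x)). unfold Rdiv; ring. }
 split; simpl.
 - eapply is_derive_eqv. apply isd_cos; exact H'. simpl; ring.
 - eapply is_derive_eqv. apply isd_sin; exact H'. simpl; ring.
Qed.


Section Alg.
Variables (n d : nat).

Definition dir_fun (F : CFun n d) (e : dir n d) (q : Cfg n d) (t : R) : R -> C :=
  match e with None => fun s => F q s | Some (J, i) => fun s => F (upd q J i s) t end.
Definition dir_pt (e : dir n d) (q : Cfg n d) (t : R) : R :=
  match e with None => t | Some (J, i) => q J i end.

Lemma dir_ex_E F e q t : dir_ex F e q t = Cex_derive (dir_fun F e q t) (dir_pt e q t).
Proof. by case: e => [[J i]|]. Qed.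
Lemma dir_deriv_E F e q t : dir_deriv F e q t = Cderiv (dir_fun F e q t) (dir_pt e q t).
Proof. by case: e => [[J i]|]. Qed.

Variable S : CFun n d -> Prop.

Inductive Alg : CFun n d -> Prop :=
 | Agen f : S f -> Alg f
 | Aplus f g : Alg f -> Alg g -> Alg (fun q t => Cplus (f q t) (g q t))
 | Amult f g : Alg f -> Alg g -> Alg (fun q t => Cmult (f q t) (g q t)).

Hypothesis HS1 : forall f, S f -> forall e q t, dir_ex f e q t.
Hypothesis HS2 : forall f, S f -> forall e, Alg (dir_deriv f e).

Lemma Alg_deriv h : Alg h -> (forall e q t, dir_ex h e q t) /\ (forall e, Alg (dir_deriv h e)).
Proof.
elim => [f Sf | f g Af [Hf1 Hf2] Ag [Hg1 Hg2] | f g Af [Hf1 Hf2] Ag [Hg1 Hg2]].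
- split; [exact: HS1 | exact: HS2].
- have key : forall e q t, CisD (dir_fun (fun q t => Cplus (f q t) (g q t)) e q t) (dir_pt e q t)
      (Cplus (dir_deriv f e q t) (dir_deriv g e q t)).
  { move=> e q t; rewrite !dir_deriv_E.
    have H1 := Hf1 e q t; have H2 := Hg1 e q t.
    rewrite dir_ex_E in H1; rewrite dir_ex_E in H2.
    move/Cex_CisD in H1; move/Cex_CisD in H2.
    have := CisD_plus H1 H2. by case: e {H1 H2} => [[J i]|]. }
  split.
  + move=> e q t; rewrite dir_ex_E; exact: CisD_ex (key e q t).
  + move=> e.
    have -> : dir_deriv (fun q t => Cplus (f q t) (g q t)) e =
              (fun q t => Cplus (dir_deriv f e q t) (dir_deriv g e q t)).
    { apply functional_extensionality => q; apply functional_extensionality => t.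
      rewrite dir_deriv_E; exact: CisD_deriv (key e q t). }
    exact: Aplus.
- have key : forall e q t, CisD (dir_fun (fun q t => Cmult (f q t) (g q t)) e q t) (dir_pt e q t)
      (Cplus (Cmult (dir_deriv f e q t) (g q t)) (Cmult (f q t) (dir_deriv g e q t))).
  { move=> e q t; rewrite !dir_deriv_E.
    have H1 := Hf1 e q t; have H2 := Hg1 e q t.
    rewrite dir_ex_E in H1; rewrite dir_ex_E in H2.
    move/Cex_CisD in H1; move/Cex_CisD in H2.
    have := CisD_mult H1 H2. case: e {H1 H2} => [[J i]|] //=.
    have -> : upd q J i (q J i) = q.
    { apply functional_extensionality => K; apply functional_extensionality => j.
      rewrite /upd. case: ifP => //; case/andP => /eqP -> /eqP -> //. }
    by []. }
  split.
  + move=> e q t; rewrite dir_ex_E; exact: CisD_ex (key e q t).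
  + move=> e.
    have -> : dir_deriv (fun q t => Cmult (f q t) (g q t)) e =
              (fun q t => Cplus (Cmult (dir_deriv f e q t) (g q t)) (Cmult (f q t) (dir_deriv g e q t))).
    { apply functional_extensionality => q; apply functional_extensionality => t.
      rewrite dir_deriv_E; exact: CisD_deriv (key e q t). }
    by apply: Aplus; apply: Amult.
Qed.

Lemma Alg_iter h : Alg h -> forall ds, Alg (fold_right (fun e' G => dir_deriv G e') h ds).
Proof. move=> Ah; elim => [|e ds IH] //=. exact: (proj2 (Alg_deriv IH) e). Qed.
Lemma Alg_smooth h : Alg h -> smoothC h.
Proof. move=> Ah ds e q t. exact: (proj1 (Alg_deriv (Alg_iter Ah ds))). Qed.
End Alg.

Lemma smooth_deriv n d (F : CFun n d) e : smoothC F -> smoothC (dir_deriv F e).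
Proof. move=> H ds e' q t. have := H (ds ++ e :: nil) e' q t. by rewrite fold_right_app. Qed.

Definition S_std n d (f : CFun n d) : Prop :=
  smoothC f \/ (exists c, f = fun _ _ => c) \/
  (exists W c, smoothR W /\ c <> 0 /\ f = fun q t => expi (W q t / c)).

Definition wfun n d (W : Cfg n d -> R -> R) (e : dir n d) q t : R -> R :=
  match e with None => fun s => W q s | Some (J, i) => fun s => W (upd q J i s) t end.

Lemma upd_id n d (q : Cfg n d) J i : upd q J i (q J i) = q.
Proof. apply functional_extensionality => K; apply functional_extensionality => j.
  rewrite /upd. case: ifP => //; case/andP => /eqP -> /eqP -> //. Qed.

Lemma wfun_pt n d (W : Cfg n d -> R -> R) e q t : wfun W e q t (dir_pt e q t) = W q t.
Proof. case: e => [[J i]|] //=. by rewrite upd_id. Qed.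

Lemma W_isD n d (W : Cfg n d -> R -> R) e q t : smoothR W ->
  is_derive (wfun W e q t) (dir_pt e q t) (fst (dir_deriv (fun q t => RtoC (W q t)) e q t))
  /\ dir_deriv (fun q t => RtoC (W q t)) e q t = RtoC (fst (dir_deriv (fun q t => RtoC (W q t)) e q t)).
Proof.
move=> HW. have H := HW nil e q t. simpl in H. rewrite dir_ex_E in H.
case: H => [H1 _].
have D : is_derive (wfun W e q t) (dir_pt e q t) (Derive (wfun W e q t) (dir_pt e q t)).
{ apply: Derive_correct. by case: e H1 => [[J i]|]. }
have C1 := CisD_RtoC D.
have E : dir_deriv (fun q t => RtoC (W q t)) e q t = RtoC (Derive (wfun W e q t) (dir_pt e q t)).
{ rewrite dir_deriv_E. apply: CisD_deriv. by case: e C1 {H1 D} => [[J i]|]. }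
rewrite E /=. split => //.
Qed.

Lemma S_std_1 n d (f : CFun n d) : S_std f -> forall e q t, dir_ex f e q t.
Proof.
case => [Hf | [[c ->] | [W [c [HW [Hc ->]]]]]] e q t.
- exact: (Hf nil).
- rewrite dir_ex_E. apply: CisD_ex. case: e => [[J i]|]; exact: CisD_const.
- rewrite dir_ex_E. case: (W_isD e q t HW) => [D _].
  apply: CisD_ex. have := CisD_expi Hc D. move=> H; apply: (CisD_ext _ _ H) => s; by case: e {D H} => [[J i]|].
Qed.

Lemma S_std_2 n d (f : CFun n d) : S_std f -> forall e, Alg (@S_std n d) (dir_deriv f e).
Proof.
case => [Hf | [[c ->] | [W [c [HW [Hc ->]]]]]] e.
- apply: Agen; left; exact: smooth_deriv.
- apply: Agen; right; left; exists (RtoC 0).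
  apply functional_extensionality => q; apply functional_extensionality => t.
  rewrite dir_deriv_E; apply: CisD_deriv. case: e => [[J i]|]; exact: CisD_const.
- have -> : dir_deriv (fun q t => expi (W q t / c)) e =
    fun q t => Cmult (Cmult ((0%R, (/ c)%R) : C) (dir_deriv (fun q t => RtoC (W q t)) e q t))
                     (expi (W q t / c)).
  { apply functional_extensionality => q; apply functional_extensionality => t.
    case: (W_isD e q t HW) => [D ->].
    have H := CisD_expi Hc D.
    have E : forall s, expi (wfun W e q t s / c) = dir_fun (fun q t => expi (W q t / c)) e q t s.
    { move=> s. destruct e as [[J i]|]; reflexivity. }
    have H' := CisD_ext _ E H.
    rewrite dir_deriv_E (CisD_deriv H').
    rewrite wfun_pt. unfold Cmult, RtoC; simpl. f_equal; field; exact Hc. }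
  apply: (Amult (f := fun q t => Cmult ((0%R, (/ c)%R) : C) (dir_deriv (fun q t => RtoC (W q t)) e q t))
               (g := fun q t => expi (W q t / c))).
  apply: (Amult (f := fun _ _ => ((0%R, (/ c)%R) : C)) (g := dir_deriv (fun q t => RtoC (W q t)) e)).
  all: apply: Agen.
  + right; left; by eexists.
  + left; exact: smooth_deriv.
  + right; right; by exists W, c.
Qed.

Lemma S_std_smooth n d (h : CFun n d) : Alg (@S_std n d) h -> smoothC h.
Proof. apply: Alg_smooth; [exact: S_std_1 | exact: S_std_2]. Qed.



Section Geo.
Variables (M d : nat).

Definition ext (qs : Cfg M d) : Cfg M.+1 d :=
  fun J j => match (insub (nat_of_ord J) : option 'I_M) with Some A => qs A j | None => 0 end.

Lemma wid_eq (A B : 'I_M) : (wid B == wid A) = (B == A).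
Proof. by rewrite -val_eqE -[B == A]val_eqE. Qed.

Lemma wid_max (A : 'I_M) : (wid A == ord_max) = false.
Proof. apply/negbTE. rewrite -val_eqE /=. by rewrite neq_ltn ltn_ord. Qed.

Lemma insub_wid (A : 'I_M) : (insub (nat_of_ord (wid A)) : option 'I_M) = Some A.
Proof. exact: valK. Qed.

Lemma sharp_upd_wid (q : Cfg M.+1 d) A i s : sharp (upd q (wid A) i s) = upd (sharp q) A i s.
Proof. apply functional_extensionality => B; apply functional_extensionality => j.
  by rewrite /sharp /upd wid_eq. Qed.

Lemma sharp_upd_max (q : Cfg M.+1 d) i s : sharp (upd q ord_max i s) = sharp q.
Proof. apply functional_extensionality => B; apply functional_extensionality => j.
  by rewrite /sharp /upd wid_max. Qed.

Lemma sharp_ext qs : sharp (ext qs) = qs.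
Proof. apply functional_extensionality => B; apply functional_extensionality => j.
  by rewrite /sharp /ext insub_wid. Qed.

Lemma ext_upd qs A i s : ext (upd qs A i s) = upd (ext qs) (wid A) i s.
Proof. apply functional_extensionality => J; apply functional_extensionality => j.
  rewrite /ext /upd. case: insubP => [B _ HB | HJ].
  - have -> : J = wid B by apply: val_inj; rewrite /= HB.
    by rewrite wid_eq.
  - have -> : (J == wid A) = false.
    { apply/negbTE; apply/negP => /eqP HA; move: HJ; by rewrite HA /= ltn_ord. }
    by [].
Qed.

Definition zk (k : nat) (q : Cfg M.+1 d) : Cfg M.+1 d :=
  fun J j => if (J == ord_max) && (nat_of_ord j < k)%N then 0 else q J j.

Lemma zk0 q : zk 0 q = q.
Proof. apply functional_extensionality => J; apply functional_extensionality => j.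
  by rewrite /zk ltn0 andbF. Qed.

Lemma zkS k q (Hk : (k < d)%N) : zk k.+1 q = upd (zk k q) ord_max (Ordinal Hk) 0.
Proof. apply functional_extensionality => J; apply functional_extensionality => j.
  rewrite /zk /upd ltnS leq_eqVlt.
  have -> : (j == Ordinal Hk) = (nat_of_ord j == k) by rewrite -val_eqE.
  case: (J == ord_max) => //=. by case: (nat_of_ord j == k). Qed.
Lemma zkd q : zk d q = ext (sharp q).
Proof. apply functional_extensionality => J; apply functional_extensionality => j.
  rewrite /zk /ext /sharp ltn_ord andbT. case: insubP => [B _ HB | HJ].
  - have -> : J = wid B by apply: val_inj; rewrite /= HB.
    by rewrite wid_max.
  - have -> : J = ord_max.
    { apply: val_inj => /=. have := ltn_ord J. move: HJ; rewrite ltnNge negbK => H1 H2.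
      apply/eqP; rewrite eqn_leq H1 andbT. by rewrite -ltnS. }
    by rewrite eqxx.
Qed.
End Geo.


Section S5.
Variables (M d : nat).

Definition liftdir (e : dir M d) : dir M.+1 d :=
  match e with None => None | Some (A, i) => Some (wid A, i) end.

Lemma deriv_ext (H : CFun M.+1 d) e :
  dir_deriv (fun qs t => H (@ext M d qs) t) e = fun qs t => dir_deriv H (liftdir e) (ext qs) t.
Proof. apply functional_extensionality => qs; apply functional_extensionality => t.
  case: e => [[A i]|] //=. rewrite /dq.
  have -> : (fun s => H (ext (upd qs A i s)) t) = (fun s => H (upd (ext qs) (wid A) i s) t).
  { apply functional_extensionality => s; by rewrite ext_upd. }
  by rewrite /ext insub_wid. Qed.

Lemma ex_ext (H : CFun M.+1 d) e qs t :
  dir_ex H (liftdir e) (ext qs) t -> dir_ex (fun qs t => H (@ext M d qs) t) e qs t.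
Proof. case: e => [[A i]|] //=.
  have -> : (fun s => H (ext (upd qs A i s)) t) = (fun s => H (upd (ext qs) (wid A) i s) t).
  { apply functional_extensionality => s; by rewrite ext_upd. }
  by rewrite {2}/ext insub_wid. Qed.

Lemma smooth_ext (F : CFun M.+1 d) : smoothC F -> smoothC (fun qs t => F (@ext M d qs) t).
Proof. move=> HF ds.
  have E : fold_right (fun e' G => dir_deriv G e') (fun qs t => F (@ext M d qs) t) ds =
    fun qs t => fold_right (fun e' G => dir_deriv G e') F (map liftdir ds) (ext qs) t.
  { elim: ds => [|e ds IH] //=. by rewrite IH deriv_ext. }
  rewrite E => e qs t. apply: ex_ext. exact: HF.
Qed.
End S5.

Lemma prod_deriv (c : R) (u : R -> C) (w : R -> R) x ud wd : c <> 0 ->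
  CisD u x ud -> is_derive w x wd ->
  Cderiv (fun s => Cmult (u s) (expi (w s / c))) x =
  Cmult (Cplus ud (Cmult (u x) ((0%R, (wd / c)%R) : C))) (expi (w x / c)).
Proof. move=> Hc Hu Hw. rewrite (CisD_deriv (CisD_mult Hu (CisD_expi Hc Hw))).
  unfold Cmult, Cplus; simpl; f_equal; ring. Qed.

Lemma W_der n d (W : Cfg n d -> R -> R) e q t : smoothR W ->
  is_derive (wfun W e q t) (dir_pt e q t) (Derive (wfun W e q t) (dir_pt e q t)).
Proof. move=> HW. case: (W_isD e q t HW) => [D _]. apply: Derive_correct. by exists (fst (dir_deriv (fun q t => RtoC (W q t)) e q t)). Qed.

Section S6.
Variables (M d : nat) (hbar : R) (W : Cfg M.+1 d -> R -> R).
Hypothesis Hh : hbar <> 0.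
Hypothesis HW : smoothR W.

Definition EE (q : Cfg M.+1 d) (t : R) : C := expi (W q t / hbar).
Definition Pf (h : CFun M d) : CFun M.+1 d := fun q t => Cmult (h (sharp q) t) (EE q t).

Lemma dq_wid (h : CFun M d) A i q t : dir_ex h (Some (A, i)) (sharp q) t ->
  dq (Pf h) (wid A) i q t =
  Cmult (Cplus (dq h A i (sharp q) t) (Cmult (h (sharp q) t) ((0%R, (dqR W (wid A) i q t / hbar)%R) : C))) (EE q t).
Proof. move=> Hx. rewrite /dq /Pf /EE.
  have -> : (fun s => Cmult (h (sharp (upd q (wid A) i s)) t) (expi (W (upd q (wid A) i s) t / hbar))) =
    fun s => Cmult (h (upd (sharp q) A i s) t) (expi (wfun W (Some (wid A, i)) q t s / hbar)).
  { apply functional_extensionality => s; by rewrite sharp_upd_wid. }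
  have Hu := Cex_CisD Hx.
  have Hw := W_der (Some (wid A, i)) q t HW.
  rewrite (prod_deriv Hh Hu Hw) wfun_pt.
  change (q (wid A) i) with (sharp q A i). by rewrite upd_id.
Qed.

Lemma dt_P (h : CFun M d) q t : dir_ex h None (sharp q) t ->
  dt (Pf h) q t =
  Cmult (Cplus (dt h (sharp q) t) (Cmult (h (sharp q) t) ((0%R, (dtR W q t / hbar)%R) : C))) (EE q t).
Proof. move=> Hx. rewrite /dt /Pf /EE.
  have Hu := Cex_CisD Hx.
  have Hw := W_der None q t HW.
  exact: (prod_deriv Hh Hu Hw).
Qed.

Lemma dq_max (h : CFun M d) i q t :
  dq (Pf h) ord_max i q t =
  Cmult (Cplus (RtoC 0) (Cmult (h (sharp q) t) ((0%R, (dqR W ord_max i q t / hbar)%R) : C))) (EE q t).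
Proof. rewrite /dq /Pf /EE.
  have -> : (fun s => Cmult (h (sharp (upd q ord_max i s)) t) (expi (W (upd q ord_max i s) t / hbar))) =
    fun s => Cmult ((fun _ => h (sharp q) t) s) (expi (wfun W (Some (ord_max, i)) q t s / hbar)).
  { apply functional_extensionality => s; by rewrite sharp_upd_max. }
  have Hw := W_der (Some (ord_max, i)) q t HW.
  rewrite (prod_deriv Hh (CisD_const _ _) Hw) wfun_pt //.
Qed.

Lemma pshift_P (h : CFun M d) A i : (forall qs t, dir_ex h (Some (A, i)) qs t) ->
  p_shift hbar W A i (Pf h) = Pf (p_std hbar A i h).
Proof. move=> Hx. apply functional_extensionality => q; apply functional_extensionality => t.
  rewrite /p_shift dq_wid //. rewrite /Pf /p_std.
  move: (dq h A i (sharp q) t) (h (sharp q) t) (EE q t) (dqR W (wid A) i q t) => a b e w.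
  case: a => a1 a2; case: b => b1 b2; case: e => e1 e2.
  unfold Cminus, Cmult, Cplus, Copp, RtoC, Ci; simpl; f_equal; field; exact Hh.
Qed.
End S6.

Section S7.
Variables (M d : nat) (hbar : R) (W : Cfg M.+1 d -> R -> R).
Hypothesis Hh : hbar <> 0.
Hypothesis HW : smoothR W.

Lemma word_P (w : word M d) (g : CFun M d) : (forall f, In (Mul f) w -> smoothC f) -> smoothC g ->
  smoothC (apply_word (fun f => f) (p_std hbar) w g) /\
  apply_word (@lift_sharp M d) (p_shift hbar W) w (Pf hbar W g) =
  Pf hbar W (apply_word (fun f => f) (p_std hbar) w g).
Proof.
move=> Hw Hg. elim: w Hw => [|[f|A i] w IH] Hw //=.
- have [Hs E] : smoothC (apply_word (fun f => f) (p_std hbar) w g) /\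
    apply_word (@lift_sharp M d) (p_shift hbar W) w (Pf hbar W g) =
    Pf hbar W (apply_word (fun f => f) (p_std hbar) w g).
  { apply: IH => f' Hf'; apply: Hw; by right. }
  have Hf : smoothC f by apply: Hw; left.
  split.
  + apply: S_std_smooth. apply: (Amult (f := f) (g := apply_word (fun f => f) (p_std hbar) w g));
      apply: Agen; by left.
  + rewrite E. apply functional_extensionality => q; apply functional_extensionality => t.
    by rewrite /Pf /lift_sharp Cmult_assoc.
- have [Hs E] : smoothC (apply_word (fun f => f) (p_std hbar) w g) /\
    apply_word (@lift_sharp M d) (p_shift hbar W) w (Pf hbar W g) =
    Pf hbar W (apply_word (fun f => f) (p_std hbar) w g).
  { apply: IH => f' Hf'; apply: Hw; by right. }
  split.
  + apply: S_std_smooth.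
    apply: (Amult (f := fun _ _ => Copp (Cmult Ci (RtoC hbar)))
                  (g := dir_deriv (apply_word (fun f => f) (p_std hbar) w g) (Some (A, i)))).
    * apply: Agen; right; left; by eexists.
    * apply: Agen; left; exact: smooth_deriv.
  + rewrite E. apply: pshift_P => // qs t. exact: (Hs nil).
Qed.

Lemma op_P (H : oper M d) (g : CFun M d) : op_smooth H -> smoothC g -> forall q t,
  apply_op (@lift_sharp M d) (p_shift hbar W) H (Pf hbar W g) q t =
  Cmult (apply_op (fun f => f) (p_std hbar) H g (sharp q) t) (EE hbar W q t).
Proof.
move=> HH Hg q t. rewrite /apply_op. elim: H HH => [|w H IH] HH /=.
- unfold Cmult, RtoC; simpl; f_equal; ring.
- have [_ E] := word_P w (fun f Hf => HH w (or_introl erefl) f Hf) Hg.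
  rewrite E IH; last by move=> w' Hw'; apply: HH; right.
  rewrite /Pf Cmult_plus_distr_r //.
Qed.
End S7.


Lemma C_eq (a b : C) : fst a = fst b -> snd a = snd b -> a = b.
Proof. case: a => a1 a2; case: b => b1 b2 /= -> -> //. Qed.

Lemma expi_cancel (a b : C) th : Cmult a (expi th) = Cmult b (expi th) -> a = b.
Proof. move=> H.
  have K : forall z : C, z = Cmult (Cmult z (expi th)) ((cos th, - sin th) : C).
  { case=> z1 z2. have S := sin2_cos2 th. unfold Rsqr in S.
    unfold Cmult, expi; simpl. f_equal.
    - transitivity (z1 * (sin th * sin th + cos th * cos th)); [rewrite S; ring | ring].
    - transitivity (z2 * (sin th * sin th + cos th * cos th)); [rewrite S; ring | ring]. }
  by rewrite (K a) (K b) H.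
Qed.

Lemma expi_inv (p : C) x h : h <> 0 -> Cmult (Cmult p (expi (x / - h))) (expi (x / h)) = p.
Proof. move=> Hh. have -> : x / - h = - (x / h) by field.
  case: p => p1 p2. have S := sin2_cos2 (x / h). unfold Rsqr in S.
  unfold Cmult, expi; simpl. rewrite cos_neg sin_neg. f_equal.
  - transitivity (p1 * (sin (x/h) * sin (x/h) + cos (x/h) * cos (x/h))); [ring | rewrite S; ring].
  - transitivity (p2 * (sin (x/h) * sin (x/h) + cos (x/h) * cos (x/h))); [ring | rewrite S; ring].
Qed.

Lemma alg0 (p' p e : C) wd h : h <> 0 ->
  Cminus (Cmult (Copp (Cmult Ci (RtoC h))) p') (Cmult (RtoC wd) p) = RtoC 0 ->
  Cplus (Cmult p' e) (Cmult p (Cmult ((0%R, (wd / - h)%R) : C) e)) = RtoC 0.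
Proof. move=> Hh H. case: p' H => a1 a2; case: p => b1 b2; case: e => e1 e2 H.
  unfold Cminus, Cmult, Cplus, Copp, RtoC, Ci in H; simpl in H. case: H => H1 H2.
  have Ea2 : a2 = wd * b1 / h. { apply: (Rmult_eq_reg_l h) => //. field_simplify => //. lra. }
  have Ea1 : a1 = - (wd * b2) / h. { apply: (Rmult_eq_reg_l h) => //. field_simplify => //. lra. }
  unfold Cmult, Cplus, RtoC; simpl. rewrite Ea1 Ea2. f_equal; field; exact Hh.
Qed.

Lemma Cminus_inj (x y z : C) : Cminus x z = Cminus y z -> x = y.
Proof. case: x => ??; case: y => ??; case: z => ??.
  unfold Cminus, Cplus, Copp; simpl => [[H1 H2]]. apply: C_eq => /=; lra. Qed.

Lemma alg1 (a b X : C) w h th : h <> 0 ->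
  (Cmult (Cmult Ci (RtoC h)) (Cmult (Cplus a (Cmult b ((0%R, (w / h)%R) : C))) (expi th)) =
   Cminus (Cmult X (expi th)) (Cmult (RtoC w) (Cmult b (expi th)))) <->
  Cmult (Cmult Ci (RtoC h)) a = X.
Proof. move=> Hh.
  have L : Cmult (Cmult Ci (RtoC h)) (Cmult (Cplus a (Cmult b ((0%R, (w / h)%R) : C))) (expi th)) =
     Cminus (Cmult (Cmult (Cmult Ci (RtoC h)) a) (expi th)) (Cmult (RtoC w) (Cmult b (expi th))).
  { case: a => ??; case: b => ??.
    unfold Cminus, Cmult, Cplus, Copp, RtoC, Ci, expi; simpl; f_equal; field; exact Hh. }
  rewrite L. split => [H | ->] //.
  exact: (expi_cancel (Cminus_inj H)).
Qed.

Lemma alg2 (b : C) w h th : h <> 0 ->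
  Cminus (Cmult (Copp (Cmult Ci (RtoC h))) (Cmult (Cplus (RtoC 0) (Cmult b ((0%R, (w / h)%R) : C))) (expi th)))
         (Cmult (RtoC w) (Cmult b (expi th))) = RtoC 0.
Proof. move=> Hh. case: b => ??.
  unfold Cminus, Cmult, Cplus, Copp, RtoC, Ci, expi; simpl; f_equal; field; exact Hh. Qed.

Lemma alg3 (Y : C) th : Cmult Y (expi th) = RtoC 0 <-> Y = RtoC 0.
Proof. split => [H | ->].
  - apply: (expi_cancel (th := th)). rewrite H. unfold Cmult, RtoC, expi; simpl; f_equal; ring.
  - unfold Cmult, RtoC, expi; simpl; f_equal; ring.
Qed.

Lemma MVT_C (f : R -> C) : (forall s, CisD f s (RtoC 0)) -> forall a b, f a = f b.
Proof. move=> H.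
  have K : forall a b, a < b -> f a = f b.
  { move=> a b Hab. apply: C_eq.
    - apply: (eq_is_derive (fun s => fst (f s))) => // s _. exact: (proj1 (H s)).
    - apply: (eq_is_derive (fun s => snd (f s))) => // s _. exact: (proj2 (H s)). }
  move=> a b. case: (Rtotal_order a b) => [Hab|[->|Hab]] //. by apply: K.
  symmetry; exact: K.
Qed.


Section S8.
Variables (M d : nat) (hbar : R) (W : Cfg M.+1 d -> R -> R).
Hypothesis Hh : hbar <> 0.
Hypothesis HW : smoothR W.
Variables (K : Type) (Hs : oper M d) (gam : K -> oper M d).
Hypothesis HHs : op_smooth Hs.
Hypothesis Hgam : forall a, op_smooth (gam a).

Lemma equiv_P psis : smoothC psis ->
  (QM_L hbar Hs gam W (Pf hbar W psis) <-> QM_sharp hbar Hs gam psis).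
Proof.
move=> Hps.
have cond2 : forall (i : 'I_d) q t,
   Cminus (Cmult (Copp (Cmult Ci (RtoC hbar))) (dq (Pf hbar W psis) ord_max i q t))
          (Cmult (RtoC (dqR W ord_max i q t)) (Pf hbar W psis q t)) = RtoC 0.
{ move=> i q t. rewrite dq_max // /Pf /EE. exact: alg2. }
have c1 : forall q t,
   (Cmult (Cmult Ci (RtoC hbar)) (dt (Pf hbar W psis) q t) =
    Cminus (apply_op (@lift_sharp M d) (p_shift hbar W) Hs (Pf hbar W psis) q t)
           (Cmult (RtoC (dtR W q t)) (Pf hbar W psis q t))) <->
   Cmult (Cmult Ci (RtoC hbar)) (dt psis (sharp q) t) =
     apply_op (fun f => f) (p_std hbar) Hs psis (sharp q) t.
{ move=> q t. rewrite dt_P //; last exact: (Hps nil).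
  rewrite op_P // /Pf /EE. exact: alg1. }
have c3 : forall a q t,
   apply_op (@lift_sharp M d) (p_shift hbar W) (gam a) (Pf hbar W psis) q t = RtoC 0 <->
   apply_op (fun f => f) (p_std hbar) (gam a) psis (sharp q) t = RtoC 0.
{ move=> a q t. rewrite op_P // /EE. exact: alg3. }
split.
- case=> [C1 [C2 C3]]. split.
  + move=> qs t. rewrite -(sharp_ext qs). exact: ((c1 (ext qs) t).1 (C1 _ _)).
  + move=> a qs t. rewrite -(sharp_ext qs). exact: ((c3 a (ext qs) t).1 (C3 _ _ _)).
- case=> [C1 C3]. split; [|split].
  + move=> q t. apply/c1. exact: C1.
  + exact: cond2.
  + move=> a q t. apply/c3. exact: C3.
Qed.
End S8.


Lemma upd_upd n d (q : Cfg n d) J i s s' : upd (upd q J i s) J i s' = upd q J i s'.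
Proof. apply functional_extensionality => K; apply functional_extensionality => j.
  rewrite /upd. by case: ifP => // ->. Qed.
Lemma upd_same n d (q : Cfg n d) J i s : upd q J i s J i = s.
Proof. by rewrite /upd !eqxx. Qed.

Section S9.
Variables (M d : nat) (hbar : R) (W : Cfg M.+1 d -> R -> R).
Hypothesis Hh : hbar <> 0.
Hypothesis HW : smoothR W.
Variable psi : CFun M.+1 d.
Hypothesis Hpsi : smoothC psi.
Hypothesis C2 : forall (i : 'I_d) q t,
     Cminus (Cmult (Copp (Cmult Ci (RtoC hbar))) (dq psi ord_max i q t))
            (Cmult (RtoC (dqR W ord_max i q t)) (psi q t)) = RtoC 0.

Definition GG : CFun M.+1 d := fun q t => Cmult (psi q t) (expi (W q t / - hbar)).

Lemma GG_const i q t : GG (upd q ord_max i 0) t = GG q t.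
Proof.
have Hn : - hbar <> 0 by move=> H; apply: Hh; lra.
have key : forall q1, CisD (fun s => GG (upd q1 ord_max i s) t) (q1 ord_max i) (RtoC 0).
{ move=> q1.
  have Hu := Cex_CisD (Hpsi nil (Some (ord_max, i)) q1 t).
  have Hw := W_der (Some (ord_max, i)) q1 t HW.
  have H := CisD_mult Hu (CisD_expi Hn Hw).
  apply: (CisD_eqv H). rewrite wfun_pt /= upd_id.
  exact: (alg0 _ Hh (C2 i q1 t)). }
have phi : forall s, CisD (fun s' => GG (upd q ord_max i s') t) s (RtoC 0).
{ move=> s. have := key (upd q ord_max i s). rewrite upd_same.
  apply: CisD_ext => s'. by rewrite upd_upd. }
have := MVT_C phi 0 (q ord_max i). by rewrite upd_id.
Qed.

Lemma GG_zk k : (k <= d)%N -> forall q t, GG (zk k q) t = GG q t.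
Proof. elim: k => [|k IH] Hk q t; first by rewrite zk0.
  rewrite (zkS k q Hk) GG_const IH //. exact: ltnW. Qed.

Lemma GG_sharp q t : GG (ext (sharp q)) t = GG q t.
Proof. by rewrite -zkd GG_zk. Qed.

Lemma psi_P : psi = Pf hbar W (fun qs t => GG (ext qs) t).
Proof. apply functional_extensionality => q; apply functional_extensionality => t.
  rewrite /Pf /EE GG_sharp /GG expi_inv //. Qed.

Lemma GG_smooth : smoothC GG.
Proof. apply: S_std_smooth.
  apply: (Amult (f := psi) (g := fun q t => expi (W q t / - hbar))); apply: Agen.
  - by left.
  - right; right; exists W, (- hbar); split => //; split => //. move=> H; apply: Hh; lra.
Qed.
End S9.


Unset Implicit Arguments.

(* N = M.+1 is the order of L; L^# has order M = N - 1. *)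
Theorem proposition1 (M d : nat) (HM : (1 <= M)%N) (Hd : (1 <= d)%N)
  (hbar : R) (Hhbar : 0 < hbar)
  (K : Type) (Hs : oper M d) (gam : K -> oper M d)
  (W : Cfg M.+1 d -> R -> R) :
  op_smooth Hs -> (forall a : K, op_smooth (gam a)) -> smoothR W ->
  forall psi : CFun M.+1 d, smoothC psi ->
  (QM_L hbar Hs gam W psi <->
   exists psis : CFun M d,
     smoothC psis /\ QM_sharp hbar Hs gam psis /\
     forall (q : Cfg M.+1 d) (t : R),
       psi q t = Cmult (psis (sharp q) t) (expi (W q t / hbar))).
Proof.
move=> HHs Hgam HW psi Hpsi.
have Hh : hbar <> 0 by lra.
split.
- move=> HL. have C2 := proj1 (proj2 HL).
  have E := psi_P Hh HW Hpsi C2.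
  exists (fun qs t => GG hbar W psi (ext qs) t).
  have Hs' : smoothC (fun qs t => GG hbar W psi (ext qs) t) := smooth_ext (GG_smooth Hh HW Hpsi).
  split; [exact: Hs' | split].
  + rewrite E in HL. exact: (proj1 (equiv_P Hh HW gam HHs Hgam Hs') HL).
  + move=> q t. by rewrite {1}E.
- case=> psis [Hs' [HQ E]].
  have -> : psi = Pf hbar W psis.
  { apply functional_extensionality => q; apply functional_extensionality => t. exact: E. }
  exact: (proj2 (equiv_P Hh HW gam HHs Hgam Hs') HQ).
Qed.
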